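(* Let $\mathbf T$ be a countably infinite homogeneous tournament and $\mathbf T^*$ an expansion of $\mathbf T$ as in the context such that $\mathrm{Age}(\mathbf T^* )$ has the Ramsey property. Then $\mathrm{Age}(\mathbf T[I_\omega]^* )$ has the Ramsey property.
   Context: For relational structures $\mathbf A,\mathbf B$ in the same language, $\binom{\mathbf B}{\mathbf A}$ denotes the set of substructures of $\mathbf B$ isomorphic to $\mathbf A$. For $k\ge 1$, $\mathbf C\to(\mathbf B)^{\mathbf A}_k$ means: for every map $c:\binom{\mathbf C}{\mathbf A}\to[k]=\{0,\dots,k-1\}$ there is $\mathbf B'\in\binom{\mathbf C}{\mathbf B}$ such that $c$ is constant on $\binom{\mathbf B'}{\mathbf A}$. A class $\mathcal K$ of finite structures has the Ramsey property if for all $k\ge1$ and all $\mathbf A,\mathbf B\in\mathcal K$ there is $\mathbf C\in\mathcal K$ with $\mathbf C\to(\mathbf B)^{\mathbf A}_k$. The age $\mathrm{Age}(\mathbf F)$ of a structure $\mathbf F$ is the class of finite structures embeddable in $\mathbf F$. A tournament is a directed graph in which every pair of distinct vertices carries exactly one directed edge; it is homogeneous if every isomorphism between finite substructures extends to an automorphism. $\mathbf T=(T,E^{\mathbf T})$ is a countable homogeneous tournament, and $\mathbf T^*$ is an expansion of $\mathbf T$ to a countable relational language $L_{\mathbf T^*}\supseteq\{E,<\}$ in which $<$ is interpreted as a linear order $<^*$ on $T$. Fix a linear order $\prec$ on $\mathbb N$ with $(\mathbb N,\prec)\cong(\mathbb Q,<)$. The structure $\mathbf T[I_\omega]^*$ has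 universe $T\times\mathbb N$ and language $L_{\mathbf T^*}$, interpreted as: $E((x,i),(y,j))$ iff $E^{\mathbf T}(x,y)$; for each $m$-ary $R\in L_{\mathbf T^*}\setminus\{E,<\}$, $R((x_1,i_1),\dots,(x_m,i_m))$ iff $R^{\mathbf T^*}(x_1,\dots,x_m)$; $(x,i)<(y,j)$ iff $x<^*y$, or $x=y$ and $i\prec j$. *)

(* Defs.v *)
From HB Require Import structures.
From mathcomp Require Import all_boot all_order all_algebra.
Set Implicit Arguments. Unset Strict Implicit. Unset Printing Implicit Defensive.
Import Order.TTheory GRing.Theory Num.Theory.

Record lang := Lang { sym : countType; ar : sym -> nat }.

(** A structure: a universe together with, for each symbol, a set of tuples
    (tuples are sequences; well-formedness w.r.t. arities is a separate
    predicate). *)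
Record struct (L : lang) := Struct {
  car : Type;
  srel : sym L -> seq car -> Prop }.
Arguments srel {L} s _ _ : rename.
Arguments Struct {L} car srel : rename.

Record fstruct (L : lang) := FStruct {
  fcar : finType;
  frel : sym L -> seq fcar -> Prop }.
Arguments frel {L} s _ _ : rename.
Arguments FStruct {L} fcar frel : rename.

Definition wf_struct L (M : struct L) :=
  forall s (t : seq (car M)), srel M s t -> size t = ar s.

Definition embeds L (A : fstruct L) (F : struct L) :=
  exists f : fcar A -> car F, injective f /\
    forall s (t : seq (fcar A)), frel A s t <-> srel F s (map f t).

Definition fiso L (A B : fstruct L) :=
  exists f : fcar A -> fcar B, bijective f /\
    forall s (t : seq (fcar A)), frel A s t <-> frel B s (map f t).

Definition induced L (C : fstruct L) (S : {set fcar C}) : fstruct L :=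
  @FStruct L {x : fcar C | x \in S}
    (fun s t => frel C s (map val t)).

Definition arrows L (C B A : fstruct L) (k : nat) :=
  forall c : {set fcar C} -> 'I_k,
    exists B' : {set fcar C}, fiso (induced B') B /\
      forall A1 A2 : {set fcar C}, A1 \subset B' -> A2 \subset B' ->
        fiso (induced A1) A -> fiso (induced A2) A -> c A1 = c A2.

Definition ramsey_property L (K : fstruct L -> Prop) :=
  forall k, 0 < k -> forall A B, K A -> K B ->
    exists C, K C /\ arrows C B A k.

Definition Age L (F : struct L) : fstruct L -> Prop := fun A => embeds A F.

Definition tournament (T : Type) (E : T -> T -> Prop) :=
  (forall x, ~ E x x) /\ (forall x y, x <> y -> (E x y <-> ~ E y x)).

(** Every isomorphism between finite substructures (a map f injective on the
    finite set X, preserving E both ways on X, onto its image) extends to an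
    automorphism. *)
Definition homogeneous_digraph (T : eqType) (E : T -> T -> Prop) :=
  forall (X : seq T) (f : T -> T), {in X &, injective f} ->
    (forall x y, x \in X -> y \in X -> (E x y <-> E (f x) (f y))) ->
    exists g : T -> T, bijective g /\ (forall x y, E x y <-> E (g x) (g y)) /\
      {in X, g =1 f}.

Definition strict_linear_order (T : Type) (lt : T -> T -> Prop) :=
  (forall x, ~ lt x x) /\ (forall x y z, lt x y -> lt y z -> lt x z) /\
  (forall x y, x <> y -> lt x y \/ lt y x).

Definition iso_to_rat (prec : nat -> nat -> Prop) :=
  exists g : nat -> rat, bijective g /\ forall i j, prec i j <-> (g i < g j)%R.

(** T[I_omega]^*, built from the relations R of T^* (with symbol Lt for <). *)
Definition TIomega L (Lt : sym L) (T : Type) (R : sym L -> seq T -> Prop)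
  (prec : nat -> nat -> Prop) : struct L :=
  @Struct L (T * nat)%type (fun s t =>
    if s == Lt then
      match t with
      | [:: a; b] => R Lt [:: a.1; b.1] \/ (a.1 = b.1 /\ prec a.2 b.2)
      | _ => False
      end
    else R s (map fst t)).

(* Main.v *)
Require Import Defs.
From mathcomp Require Import all_boot all_order all_algebra.
Set Implicit Arguments. Unset Strict Implicit. Unset Printing Implicit Defensive.

Lemma set_of_card (U : finType) (A : {set U}) n :
  n <= #|A| -> exists B : {set U}, B \subset A /\ #|B| = n.
Proof.
elim: n => [|n IH] le; first by exists set0; rewrite sub0set cards0.
have [B [sBA cB]] := IH (ltnW le).
have : 0 < #|A :\: B| by rewrite cardsDS // subn_gt0 cB.
rewrite card_gt0 => /set0Pn [x /setDP [xA xB]].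
exists (x |: B); split; first by rewrite subUset sub1set xA sBA.
by rewrite cardsU1 xB cB add1n.
Qed.

Definition ramsey_prop (K : finType) m t s :=
  forall (U : finType) (H : {set U}) (chi : {set U} -> K), s <= #|H| ->
  exists H' : {set U}, [/\ H' \subset H, #|H'| = t &
   forall X Y : {set U}, X \subset H' -> Y \subset H' -> #|X| = m -> #|Y| = m -> chi X = chi Y].

Fixpoint good (U : finType) (K : Type) (chi : {set U} -> K) m (a : seq U) : Prop :=
  if a is x :: a' then
    (forall Y Z : {set U}, Y \subset [set z in a'] -> Z \subset [set z in a'] ->
       #|Y| = m -> #|Z| = m -> chi (x |: Y) = chi (x |: Z)) /\ good chi m a'
  else True.

Lemma good_at (U : finType) (K : Type) (chi : {set U} -> K) m a x :
  good chi m a -> x \in a -> forall Y Z : {set U},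
  Y \subset [set z in drop (index x a).+1 a] -> Z \subset [set z in drop (index x a).+1 a] ->
  #|Y| = m -> #|Z| = m -> chi (x |: Y) = chi (x |: Z).
Proof.
elim: a => //= y a IH [gy ga]; case: (y =P x) => [<- _|nyx].
  by rewrite /= drop0; exact: gy.
rewrite inE => /predU1P [xy|xa]; first by case: nyx.
exact: IH.
Qed.

Lemma build (K : finType) m (IHm : forall t, exists s, ramsey_prop K m t s) L :
  exists s, forall (U : finType) (H : {set U}) (chi : {set U} -> K), s <= #|H| ->
    exists a : seq U, [/\ uniq a, size a = L, {subset a <= H} & good chi m a].
Proof.
elim: L => [|L [sL IHL]].
  by exists 0 => U H chi _; exists [::].
have [s1 Hs1] := IHm sL.
exists s1.+1 => U H chi le.
have : 0 < #|H| by apply: leq_ltn_trans le.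
rewrite card_gt0 => /set0Pn [x xH].
have le1 : s1 <= #|H :\ x| by move: le; rewrite (cardsD1 x H) xH.
have [H2 [sH2 cH2 hom]] := Hs1 U (H :\ x) (fun Y => chi (x |: Y)) le1.
have [a [ua sa suba ga]] := IHL U H2 chi (eq_leq (esym cH2)).
exists (x :: a); split.
- rewrite /= ua andbT; apply/negP => xa.
  by have := subsetP sH2 _ (suba _ xa); rewrite !inE eqxx.
- by rewrite /= sa.
- move=> z; rewrite inE => /predU1P [->//|za].
  by have := subsetP sH2 z (suba z za); rewrite inE => /andP[_ ->].
- split=> // Y Z sY sZ cY cZ; apply: hom => //.
    by apply: subset_trans sY _; apply/subsetP => z; rewrite inE; exact: suba.
  by apply: subset_trans sZ _; apply/subsetP => z; rewrite inE; exact: suba.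
Qed.

Lemma pigeon (U K : finType) (P : {set U}) (f : U -> K) t (k0 : K) :
  #|K| * t <= #|P| -> exists c, t <= #|[set z in P | f z == c]|.
Proof.
move=> le; case: t le => [|t] le; first by exists k0.
have [c hc|hc] := pickP (fun c => t < #|[set z in P | f z == c]|); first by exists c.
have : #|P| <= #|K| * t.
  have -> : #|P| = \sum_(c : K) #|[set z in P | f z == c]|.
    rewrite -sum1_card (partition_big f predT) //=.
    by apply: eq_bigr => c _; rewrite -sum1_card; apply: eq_bigl => z; rewrite inE.
  rewrite -sum_nat_const; apply: leq_sum => c _.
  by have := hc c; rewrite /= ltnNge => /negbFE.
move=> h; have := leq_trans le h.
have K0 : 0 < #|K| by apply/card_gt0P; exists k0.
by rewrite leq_pmul2l // ltnn.
Qed.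

From mathcomp Require Import zify.

Lemma mem_drop_index (T : eqType) (a : seq T) y j :
  y \in a -> j <= index y a -> y \in drop j a.
Proof.
move=> ya le; have := ya.
by rewrite -{1}(cat_take_drop j a) mem_cat in_take // ltnNge le.
Qed.

Lemma ramsey (K : finType) m t : exists s, ramsey_prop K m t s.
Proof.
elim: m t => [|m IHm] t.
  exists t => U H chi le; have [B [sB cB]] := set_of_card le.
  by exists B; split=> // X Y _ _ /cards0_eq -> /cards0_eq ->.
have [s Hs] := build IHm (#|K| * t + m).
exists s => U H chi le.
have [a [ua sa suba ga]] := Hs U H chi le.
set n := #|K| * t.
pose P := [set z in take n a].
pose f := fun z => chi (z |: [set y in take m (drop (index z a).+1 a)]).
have cP : #|P| = n.
  by rewrite cardsE (card_uniqP _) ?take_uniq // size_takel // sa leq_addr.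
have [c hc] := pigeon (t:=t) f (chi set0) (eq_leq (esym cP)).
have [H' [sH' cH']] := set_of_card hc.
have H'a : forall z, z \in H' -> z \in a.
  by move=> z /(subsetP sH'); rewrite !inE => /andP [zt _]; exact: mem_take zt.
exists H'; split => //.
  by apply/subsetP => z /H'a; exact: suba.
suff key : forall X : {set U}, X \subset H' -> #|X| = m.+1 -> chi X = c.
  by move=> X Y sX sY cX cY; rewrite (key X) // (key Y).
move=> X sX cX.
have : 0 < #|X| by rewrite cX.
rewrite card_gt0 => /set0Pn [z0 z0X].
case: (arg_minnP (fun z => index z a) z0X) => x xX minx.
have xH : x \in [set z in P | f z == c] by apply: (subsetP sH'); apply: (subsetP sX).
move: xH; rewrite !inE => /andP [xt /eqP fx].
have xa : x \in a by apply: mem_take xt.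
have ix : index x a < n by rewrite -in_take.
have sYd : X :\ x \subset [set z in drop (index x a).+1 a].
  apply/subsetP => y; rewrite !inE => /andP [yx yX].
  have ya : y \in a by apply: H'a; apply: (subsetP sX).
  rewrite mem_drop_index //; have := minx y yX; rewrite leq_eqVlt => /orP [/eqP e|//].
  by have := nth_index x ya; rewrite -e (nth_index x xa) => exy; move: yx; rewrite exy eqxx.
have uD : uniq (take m (drop (index x a).+1 a)) by rewrite take_uniq // drop_uniq.
have cY0 : #|[set y in take m (drop (index x a).+1 a)]| = m.
  rewrite cardsE (card_uniqP uD) size_takel // size_drop sa; lia.
rewrite -{1}(setD1K xX) -fx /f; apply: (good_at ga xa) => //.
  by apply/subsetP => y; rewrite !inE; exact: mem_take.
have xX2 : x \in X := xX.
by move: cX; rewrite (cardsD1 x X) xX2 add1n => -[].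
Qed.

Set Implicit Arguments. Unset Strict Implicit. Unset Printing Implicit Defensive.

Section Multi.
Variables (I : finType) (k : nat).

Definition upd (V : finType) (S : {ffun I -> {set V}}) i (X : {set V}) : {ffun I -> {set V}} :=
  [ffun j => if j == i then X else S j].
Definition within (V : finType) (S H : {ffun I -> {set V}}) := forall j, S j \subset H j.
Definition homog1 (V : finType) (chi : {ffun I -> {set V}} -> 'I_k) H i m :=
  forall S (X X' : {set V}), within S H -> X \subset H i -> X' \subset H i ->
    #|X| = m -> #|X'| = m -> chi (upd S i X) = chi (upd S i X').

Lemma within_trans (V : finType) (S H H1 : {ffun I -> {set V}}) :
  within S H -> within H H1 -> within S H1.
Proof. by move=> a b j; apply: subset_trans (a j) (b j). Qed.

Lemma homog_mono (V : finType) chi (H H1 : {ffun I -> {set V}}) i m :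
  within H H1 -> homog1 chi H1 i m -> homog1 chi H i m.
Proof.
move=> w h S X X' wS sX sX' cX cX'; apply: h => //.
- exact: within_trans wS w.
- exact: subset_trans sX (w i).
- exact: subset_trans sX' (w i).
Qed.

Lemma multi (L : seq (I * nat)) : forall sig : I -> nat, exists sig0 : I -> nat,
  forall (V : finType) (chi : {ffun I -> {set V}} -> 'I_k) (H0 : {ffun I -> {set V}}),
  (forall i, sig0 i <= #|H0 i|) -> exists H, [/\ within H H0, forall i, #|H i| = sig i &
     forall p, p \in L -> homog1 chi H p.1 p.2].
Proof.
elim: L => [|[i m] L IH] sig.
  exists sig => V chi H0 hle.
  have ex j : exists B : {set V}, (B \subset H0 j) && (#|B| == sig j).
    by have [B [sB cB]] := set_of_card (hle j); exists B; rewrite sB cB eqxx.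
  exists [ffun j => xchoose (ex j)]; split => //.
  - by move=> j; rewrite ffunE; case/andP: (xchooseP (ex j)).
  - by move=> j; rewrite ffunE; case/andP: (xchooseP (ex j)) => _ /eqP.
pose M := \sum_j sig j.
have sigM j : sig j <= M.
  by rewrite /M (bigD1 j) //= leq_addr.
have [s Hs] := @ramsey {ffun {ffun I -> {set 'I_M.+1}} -> 'I_k} m (sig i).
pose sig1 := fun j => if j == i then s else sig j.
have [sig0 Hsig0] := IH sig1.
exists sig0 => V chi H0 hle.
have [H1 [w1 c1 h1]] := Hsig0 V chi H0 hle.
pose idx j (v : V) : 'I_M.+1 := inord (index v (enum (H1 j))).
pose decode (cd : {ffun I -> {set 'I_M.+1}}) : {ffun I -> {set V}} :=
  [ffun j => [set v in H1 j | idx j v \in cd j]].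
pose chi' (X : {set V}) := [ffun cd => chi (upd (decode cd) i X)].
have [H2 [sH2 cH2 hom2]] := Hs V (H1 i) chi' ltac:(by rewrite c1 /sig1 eqxx).
pose H : {ffun I -> {set V}} := [ffun j => if j == i then H2 else H1 j].
have wH1 : within H H1.
  by move=> j; rewrite ffunE; case: eqP => [->//|_]; exact: subxx.
exists H; split.
- exact: within_trans wH1 w1.
- by move=> j; rewrite ffunE; case: eqP => [->//|/eqP nji]; rewrite c1 /sig1 (negPf nji).
move=> p; rewrite inE => /predU1P [->|pL]; last first.
  exact: homog_mono wH1 (h1 p pL).
move=> S X X' wS sX sX' cX cX' /=.
pose cd := [ffun j => [set idx j v | v in S j]].
have eq : upd (decode cd) i =1 upd S i.
  move=> Y; apply/ffunP => j; rewrite !ffunE; case: eqP => // /eqP nji.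
  have sSj : S j \subset H1 j by have := wS j; rewrite ffunE (negPf nji).
  have idxK : {in H1 j &, injective (idx j)}.
    move=> v w vH wH; rewrite /idx => e.
    have cj : #|H1 j| = sig j by rewrite c1 /sig1 (negPf nji).
    have ib u : u \in H1 j -> index u (enum (H1 j)) < M.+1.
      move=> uH; have : index u (enum (H1 j)) < sig j by rewrite -cj cardE index_mem mem_enum.
      by move/leq_trans; apply; exact: leq_trans (sigM j) (leqnSn M).
    have iv := ib v vH; have iw := ib w wH.
    move: (congr1 (@nat_of_ord _) e); rewrite !inordK // => e2.
    by rewrite -(nth_index v (x:=v) (s:=enum (H1 j))) ?mem_enum // e2 nth_index // mem_enum.
  apply/setP => v; rewrite !inE; apply/andP/idP.
    case=> vH /imsetP [w wSj e]; rewrite (idxK v w vH _ e) //.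
    exact: (subsetP sSj).
  by move=> vS; split; [exact: (subsetP sSj) | apply: imset_f].
rewrite /H !ffunE eqxx in sX sX'.
have := f_equal (fun F : {ffun _ -> _} => F cd) (hom2 X X' sX sX' cX cX').
rewrite /= /chi' !ffunE.
by rewrite !eq.
Qed.

Lemma chain (V : finType) chi (H : {ffun I -> {set V}}) t :
  (forall i, #|H i| = t) -> (forall i m, m <= t -> homog1 chi H i m) ->
  forall S S', within S H -> within S' H -> (forall j, #|S j| = #|S' j|) -> chi S = chi S'.
Proof.
move=> cH hH S S' wS wS' cS.
suff : forall l : seq I, forall S0, within S0 H -> (forall j, j \notin l -> S0 j = S' j) ->
   (forall j, #|S0 j| = #|S' j|) -> chi S0 = chi S'.
  by move=> /(_ (enum I) S wS); apply => // j; rewrite mem_enum.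
elim => [|x l IHl] S0 w0 e0 c0.
  by congr chi; apply/ffunP => j; apply: e0.
have -> : S0 = upd S0 x (S0 x) by apply/ffunP => j; rewrite ffunE; case: eqP => // ->.
rewrite (hH x #|S0 x| _ S0 (S0 x) (S' x)) //.
- apply: IHl => [j|j|j]; rewrite ?ffunE.
  + by case: eqP => [->|_]; [exact: wS' | exact: w0].
  + by move=> jl; case: eqP => [->//|/eqP njx]; apply: e0; rewrite inE negb_or njx.
  + by case: eqP => [->//|_].
- by rewrite -(cH x); apply: subset_leq_card.
Qed.

Lemma multi_all t : exists N, forall (chi : {ffun I -> {set 'I_N.+1}} -> 'I_k),
  exists H : {ffun I -> {set 'I_N.+1}}, (forall i, #|H i| = t) /\
  forall S S', within S H -> within S' H -> (forall j, #|S j| = #|S' j|) -> chi S = chi S'.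
Proof.
pose L := [seq (i, m) | i <- enum I, m <- iota 0 t.+1].
have [sig0 Hs] := multi L (fun _ => t).
exists (\sum_i sig0 i) => chi.
have hle : forall i, sig0 i <= #|([ffun _ => setT] : {ffun I -> {set 'I_(\sum_i sig0 i).+1}}) i|.
  by move=> i; rewrite ffunE cardsT card_ord; apply: leqW; rewrite (bigD1 i) //= leq_addr.
have [H [_ cH hH]] := Hs _ chi _ hle.
exists H; split => //; apply: chain cH _ => i m mt.
apply: (hH (i, m)); apply/allpairsP; exists (i, m) => /=.
by rewrite mem_enum -[0 :: _]/(iota 0 t.+1) mem_iota ltnS mt.
Qed.

End Multi.

From Stdlib Require Import ClassicalEpsilon Classical.
Import Order.TTheory GRing.Theory Num.Theory.
Set Implicit Arguments. Unset Strict Implicit. Unset Printing Implicit Defensive.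

Definition pb (P : Prop) : bool := if excluded_middle_informative P then true else false.
Lemma pbP (P : Prop) : reflect P (pb P).
Proof. by rewrite /pb; case: excluded_middle_informative => h; constructor. Qed.

Section Key.
Variables (L : lang) (E Lt : sym L) (T : countType) (R : sym L -> seq T -> Prop)
  (prec : nat -> nat -> Prop).
Hypotheses (hELt : E != Lt) (arLt : ar Lt = 2) (wf : wf_struct (Struct T R))
  (tour : tournament (fun x y => R E [:: x; y]))
  (slo : strict_linear_order (fun x y => R Lt [:: x; y])).

Local Notation F := (TIomega Lt R prec).

Lemma srelF_E (a b : T * nat) : srel F E [:: a; b] = R E [:: a.1; b.1].
Proof. by rewrite /= (negPf hELt). Qed.
Lemma srelF_Lt2 (a b : T * nat) :
  srel F Lt [:: a; b] = (R Lt [:: a.1; b.1] \/ (a.1 = b.1 /\ prec a.2 b.2)).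
Proof. by rewrite /= eqxx. Qed.
Lemma srelF_other s t : s != Lt -> srel F s t = R s (map fst t).
Proof. by move=> h; rewrite /= (negPf h). Qed.
Lemma srelF_Lt_bad t : size t != 2 -> ~ srel F Lt t.
Proof. move=> h; rewrite /= eqxx; move: h; case: t => [|a [|b [|c t]]] //= _; by case. Qed.
Lemma RLt_bad (t : seq T) : size t != 2 -> ~ R Lt t.
Proof. by move=> h /wf; rewrite arLt => e; rewrite e in h. Qed.
Lemma RLt_size (t : seq T) : R Lt t -> size t == 2.
Proof. by move=> /wf; rewrite arLt => ->. Qed.
Lemma srelF_Lt_size t : srel F Lt t -> size t == 2.
Proof. by move=> h; apply/negPn/negP => /srelF_Lt_bad /(_ h). Qed.
Lemma Rlt_irr x : ~ R Lt [:: x; x].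
Proof. by case: slo. Qed.
Lemma eqT_E (a b : T) : a = b <-> (~ R E [:: a; b] /\ ~ R E [:: b; a]).
Proof.
split; first by move=> ->; case: tour => h _; split; apply: h.
move=> [h1 h2]; apply: NNPP => nab; case: tour => _ /(_ a b nab).
by tauto.
Qed.

Definition sameF (P : Type) (u w : P -> T * nat) :=
  forall s t, srel F s (map u t) <-> srel F s (map w t).

Section SameF.
Variables (P : Type) (u w : P -> T * nat).

Definition K1 := forall x y, (u x).1 = (u y).1 <-> (w x).1 = (w y).1.
Definition K2 := forall x y, (u x).1 = (u y).1 -> (prec (u x).2 (u y).2 <-> prec (w x).2 (w y).2).
Definition K3 := forall s t, R s (map (fun x => (u x).1) t) <-> R s (map (fun x => (w x).1) t).

Lemma sameF_K1 : sameF u w -> K1.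
Proof.
move=> h x y; have h1 := h E [:: x; y]; have h2 := h E [:: y; x].
change (srel F E [:: u x; u y] <-> srel F E [:: w x; w y]) in h1.
change (srel F E [:: u y; u x] <-> srel F E [:: w y; w x]) in h2.
rewrite !srelF_E in h1 h2.
have e1 := eqT_E (u x).1 (u y).1; have e2 := eqT_E (w x).1 (w y).1.
by tauto.
Qed.

Lemma sameF_K2 : sameF u w -> K2.
Proof.
move=> h x y e; have k1 := sameF_K1 h; have e' := (k1 x y).1 e.
have := h Lt [:: x; y].
change ((srel F Lt [:: u x; u y] <-> srel F Lt [:: w x; w y]) -> (prec (u x).2 (u y).2 <-> prec (w x).2 (w y).2)).
rewrite !srelF_Lt2 e e'.
have := @Rlt_irr (u y).1; have := @Rlt_irr (w y).1.
by tauto.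
Qed.

Lemma sameF_K3 : sameF u w -> K3.
Proof.
move=> h s t; have k1 := sameF_K1 h.
case: (s =P Lt) => [->|/eqP ns]; last first.
  by have := h s t; rewrite !srelF_other // -!map_comp.
case: t => [|x [|y [|z t]]]; try by split => /RLt_size.
have := h Lt [:: x; y].
change ((srel F Lt [:: u x; u y] <-> srel F Lt [:: w x; w y]) -> (R Lt [:: (u x).1; (u y).1] <-> R Lt [:: (w x).1; (w y).1])).
rewrite !srelF_Lt2.
case: (classic ((u x).1 = (u y).1)) => e.
  have e' := (k1 x y).1 e; rewrite e e' => _.
  by split => /Rlt_irr.
have e' : (w x).1 <> (w y).1 by move/(k1 x y).2.
by tauto.
Qed.

Lemma K_sameF : K1 -> K2 -> K3 -> sameF u w.
Proof.
move=> k1 k2 k3 s t.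
case: (s =P Lt) => [->|/eqP ns]; last first.
  by rewrite !srelF_other // -!map_comp.
case: t => [|x [|y [|z t]]]; try by split => /srelF_Lt_size.
change (srel F Lt [:: u x; u y] <-> srel F Lt [:: w x; w y]).
rewrite !srelF_Lt2.
have := k3 Lt [:: x; y]; have := k1 x y; have := k2 x y.
by rewrite /=; tauto.
Qed.

End SameF.

Section Proj.
Variables (P1 P2 Q1 Q2 : finType) (u1 : P1 -> T * nat) (u2 : P2 -> T * nat)
  (pi1 : P1 -> Q1) (pi2 : P2 -> Q2) (w1 : Q1 -> T) (w2 : Q2 -> T).
Hypotheses (w1i : injective w1) (w2i : injective w2)
  (hw1 : forall x, w1 (pi1 x) = (u1 x).1) (hw2 : forall x, w2 (pi2 x) = (u2 x).1)
  (s1 : forall q, exists x, pi1 x == q) (s2 : forall q, exists x, pi2 x == q).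

Lemma proj_iso (phi : P1 -> P2) : bijective phi -> sameF u1 (fun x => u2 (phi x)) ->
  exists psi : Q1 -> Q2, [/\ bijective psi, forall x, psi (pi1 x) = pi2 (phi x) &
    forall s t, R s (map w1 t) <-> R s (map w2 (map psi t))].
Proof.
move=> bphi hs; have k1 := sameF_K1 hs; have k3 := sameF_K3 hs.
pose sig1 q := xchoose (s1 q).
have sig1K q : pi1 (sig1 q) = q by apply/eqP; exact: xchooseP (s1 q).
pose psi q := pi2 (phi (sig1 q)).
have hpsi x : psi (pi1 x) = pi2 (phi x).
  apply: w2i; rewrite !hw2; apply/(k1 _ _).1.
  by rewrite -!hw1 sig1K.
have psii : injective psi.
  move=> q q' e; apply: w1i; rewrite -(sig1K q) -(sig1K q') !hw1.
  by apply/(k1 _ _).2; rewrite -!hw2; congr (w2 _).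
have psis q2 : exists q, psi q == q2.
  have [x2 /eqP <-] := s2 q2; case: bphi => phiinv K1' K2'.
  by exists (pi1 (phiinv x2)); rewrite hpsi K2'.
exists psi; split => //.
  pose psiinv q2 := xchoose (psis q2).
  have K2' q2 : psi (psiinv q2) = q2 by apply/eqP; exact: xchooseP (psis q2).
  exists psiinv => // q; apply: psii; exact: K2'.
move=> s t.
have -> : map w1 t = map (fun x => (u1 x).1) (map sig1 t).
  by rewrite -map_comp; apply: eq_map => q /=; rewrite -hw1 sig1K.
have -> : map w2 (map psi t) = map (fun x => (u2 (phi x)).1) (map sig1 t).
  by rewrite -!map_comp; apply: eq_map => q /=; rewrite -hw2.
exact: k3.
Qed.
End Proj.

Definition rankT (Q : finType) (w : Q -> T) (q : Q) :=
  #|[set z | pb (R Lt [:: w z; w q])]|.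

Lemma rank_inv (Q1 Q2 : finType) (w1 : Q1 -> T) (w2 : Q2 -> T) (psi : Q1 -> Q2) :
  bijective psi -> (forall s t, R s (map w1 t) <-> R s (map w2 (map psi t))) ->
  forall q, rankT w2 (psi q) = rankT w1 q.
Proof.
move=> bpsi h q; rewrite /rankT -(card_imset _ (bij_inj bpsi)).
apply: eq_card => z; rewrite inE.
case: bpsi => psiinv K1' K2'.
apply/pbP/imsetP.
  move=> hz; exists (psiinv z); last by rewrite K2'.
  rewrite inE; apply/pbP; apply/(h Lt [:: psiinv z; q]); by rewrite /= K2'.
move=> [z' + ->]; rewrite inE => /pbP hz.
by have := (h Lt [:: z'; q]).1 hz.
Qed.

Lemma rank_inj (Q : finType) (w : Q -> T) : injective w -> injective (rankT w).
Proof.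
move=> wi.
suff lt : forall q q', R Lt [:: w q; w q'] -> rankT w q < rankT w q'.
  move=> q q' e; apply: wi; apply: NNPP => ne.
  case: slo => _ [_ /(_ _ _ ne) [/lt|/lt]]; by rewrite e ltnn.
move=> q q' hq; apply: proper_card; apply/properP; split.
  apply/subsetP => z; rewrite !inE => /pbP hz; apply/pbP.
  by case: slo => _ [tr _]; apply: tr hq.
exists q; rewrite !inE; first by apply/pbP.
by apply/pbP; apply: Rlt_irr.
Qed.


Definition pseq (P : finType) (u : P -> T * nat) := undup [seq (u a).1 | a <- enum P].
Lemma pseq_in (P : finType) (u : P -> T * nat) a : (u a).1 \in pseq u.
Proof. by rewrite mem_undup; apply: map_f; rewrite mem_enum. Qed.
Definition ppi (P : finType) (u : P -> T * nat) a : seq_sub (pseq u) := SeqSub (pseq_in u a).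
Lemma ppi_surj (P : finType) (u : P -> T * nat) (q : seq_sub (pseq u)) : exists a, ppi u a == q.
Proof.
have := ssvalP q; rewrite mem_undup => /mapP [a _ e].
by exists a; apply/eqP; apply: val_inj; rewrite /= e.
Qed.
Definition PStruct (P : finType) (u : P -> T * nat) : fstruct L :=
  @FStruct L (seq_sub (pseq u)) (fun s t => R s (map (@ssval _ _) t)).

Lemma sub_same (P : finType) (X : {set P}) (u : P -> T * nat) (A : fstruct L)
  (fA : fcar A -> T * nat) (fAr : forall s t, Defs.frel A s t <-> srel F s (map fA t))
  (phi : {x | x \in X} -> fcar A) :
  (forall s t, Defs.frel A s t <-> srel F s (map fA t)) ->
  (forall s t, srel F s (map u (map val t)) <-> Defs.frel A s (map phi t)) ->
  sameF (fun p : {x | x \in X} => u (val p)) (fun p => fA (phi p)).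
Proof.
move=> _ h s t.
have e1 : map (fun p => u (val p)) t = map u (map val t) := map_comp u val t.
have e2 : map (fun p => fA (phi p)) t = map fA (map phi t) := map_comp fA phi t.
rewrite e1 e2; exact: iff_trans (h s t) (fAr _ _).
Qed.

Variables (g : nat -> rat) (ginv : rat -> nat) (ginvK : cancel ginv g) (gK : cancel g ginv)
  (hprec : forall i j, prec i j <-> (g i < g j)%R).
Variables (A : fstruct L) (fA : fcar A -> T * nat) (fAi : injective fA)
  (fAr : forall s t, Defs.frel A s t <-> srel F s (map fA t)).
Variables (B : fstruct L) (fB : fcar B -> T * nat) (fBi : injective fB)
  (fBr : forall s t, Defs.frel B s t <-> srel F s (map fB t)).
Variables (C0 : fstruct L) (fC : fcar C0 -> T) (fCi : injective fC)
  (fCr : forall s t, Defs.frel C0 s t <-> R s (map fC t)).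
Variables (N k : nat).

Local Notation I := (fcar C0).
Local Notation V := ('I_N.+1).
Local Notation QA := (seq_sub (pseq fA)).
Local Notation QB := (seq_sub (pseq fB)).
Local Notation piA := (ppi fA).
Local Notation piB := (ppi fB).

Definition iotaV (n : V) : nat := ginv ((val n)%:R)%R.
Lemma iota_lt a b : prec (iotaV a) (iotaV b) <-> val a < val b.
Proof.
apply: iff_trans (hprec _ _) _; rewrite /iotaV !ginvK ltr_nat; exact: iff_refl.
Qed.

Definition hC (p : I * V) : T * nat := (fC p.1, iotaV p.2).
Lemma hCi : injective hC.
Proof.
move=> [a n] [b m] [e1 e2]; rewrite (fCi e1); congr (_, _).
move: (congr1 g e2); rewrite /iotaV !ginvK => /eqP; rewrite eqr_nat => /eqP.
exact: val_inj.
Qed.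

Definition cset (S : {ffun I -> {set V}}) : {set I * V} := [set p | p.2 \in S p.1].

Variables (c : {set I * V} -> 'I_k) (H : {ffun I -> {set V}})
  (cH : forall i, #|H i| = #|fcar A| + #|fcar B|)
  (hH : forall S S', within S H -> within S' H -> (forall j, #|S j| = #|S' j|) ->
      c (cset S) = c (cset S')).

Local Notation C := (@FStruct L (I * V)%type (fun s t => srel F s (map hC t))).

Definition Good (Y : {set I}) (X : {set I * V}) :=
  [/\ fiso (induced (C := C) X) A, (forall p, p \in X -> p.2 \in H p.1) &
      [set p.1 | p in X] = Y].

Lemma PI Y X : Good Y X -> exists (phi : {p | p \in X} -> fcar A) (psi : {y | y \in Y} -> QA),
  [/\ bijective phi, bijective psi,
    (forall p (yY : (val p).1 \in Y), psi (Sub (val p).1 yY) = piA (phi p)) &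
    forall s t, R s (map (fun q => fC (val q)) t) <-> R s (map (@ssval _ _) (map psi t))].
Proof.
case=> [[phi [bphi hphi]] XH eY].
have sF : sameF (fun p : {p | p \in X} => hC (val p)) (fun p => fA (phi p)).
  by apply: (@sub_same _ X hC A fA fAr phi fAr) => s t; exact: hphi.
have mem1 (p : {p | p \in X}) : (val p).1 \in Y by rewrite -eY; apply: imset_f (valP p).
pose pi1 (p : {p | p \in X}) : {y | y \in Y} := Sub (val p).1 (mem1 p).
have w1i : injective (fun q : {y | y \in Y} => fC (val q)).
  by move=> q q' /fCi; exact: val_inj.
have s1 (q : {y | y \in Y}) : exists p, pi1 p == q.
  have /imsetP [p pX e] : val q \in [set p.1 | p in X] by rewrite eY; exact: valP.
  by exists (Sub p pX); apply/eqP; apply: val_inj; rewrite /= e.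
have [psi [bpsi hpsi trel]] := proj_iso (u1 := fun p => hC (val p)) (u2 := fA) (pi1 := pi1)
  (pi2 := piA) (w1 := fun q => fC (val q)) (w2 := @ssval _ _) w1i val_inj
  (fun _ => erefl) (fun _ => erefl) s1 (@ppi_surj _ fA) bphi sF.
exists phi, psi; split => // p yY.
by rewrite -hpsi; congr psi; apply: val_inj.
Qed.

Lemma SZ Y X : Good Y X -> forall y, y \in Y -> exists q : QA,
  rankT (@ssval _ _) q = #|[set z in Y | pb (R Lt [:: fC z; fC y])]| /\
  #|[set n | (y, n) \in X]| = #|[set a | piA a == q]|.
Proof.
move=> gX y yY; have [phi [psi [bphi bpsi hpsi trel]]] := PI gX.
case: gX => _ XH eY.
exists (psi (Sub y yY)); split.
  rewrite (rank_inv bpsi trel) /rankT -(card_imset _ val_inj).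
  apply: eq_card => z; rewrite inE; apply/imsetP/andP.
    by move=> [z' + ->]; rewrite inE => hz; split; [exact: valP | exact: hz].
  by move=> [zY hz]; exists (Sub z zY); rewrite ?inE.
have e1 : [set n | (y, n) \in X] =
    [set (val p).2 | p in [set p : {p | p \in X} | (val p).1 == y]].
  apply/setP => n; rewrite inE; apply/idP/imsetP.
    by move=> yn; exists (Sub (y, n) yn); rewrite ?inE.
  move=> [p + ->]; rewrite inE => /eqP <-; rewrite -surjective_pairing.
  exact: valP.
rewrite e1 card_in_imset; last first.
  move=> p p'; rewrite !inE => /eqP e /eqP e' e2; apply: val_inj.
  by rewrite [val p]surjective_pairing [val p']surjective_pairing e e' e2.
rewrite -(card_imset _ (bij_inj bphi)); apply: eq_card => a; rewrite inE.
have mem1 (p : {p | p \in X}) : (val p).1 \in Y by rewrite -eY; apply: imset_f (valP p).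
apply/imsetP/eqP.
  move=> [p + ->]; rewrite inE => /eqP e.
  by rewrite -(hpsi p (mem1 p)); congr psi; apply: val_inj.
move=> e; case: (bphi) => phiinv K1' K2'.
exists (phiinv a); rewrite ?K2' //.
rewrite inE; apply/eqP.
have := hpsi (phiinv a) (mem1 _); rewrite K2' e => /(bij_inj bpsi) /(congr1 val).
by [].
Qed.

Definition SX (X : {set I * V}) : {ffun I -> {set V}} := [ffun y => [set n | (y, n) \in X]].
Lemma csetK X : cset (SX X) = X.
Proof. by apply/setP => -[y n]; rewrite !inE ffunE inE. Qed.

Lemma SP Y X X' : Good Y X -> Good Y X' -> c X = c X'.
Proof.
move=> gX gX'; rewrite -(csetK X) -(csetK X'); apply: hH.
- by case: gX => _ XH _ y; apply/subsetP => n; rewrite ffunE inE => /XH.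
- by case: gX' => _ XH _ y; apply/subsetP => n; rewrite ffunE inE => /XH.
move=> y; rewrite !ffunE; case: (boolP (y \in Y)) => yY.
  have [q [rq sq]] := SZ gX yY; have [q' [rq' sq']] := SZ gX' yY.
  have eq : q = q' by apply: (rank_inj (w := @ssval _ _) val_inj); rewrite rq rq'.
  by rewrite sq sq' eq.
have e0 Z : Good Y Z -> [set n | (y, n) \in Z] = set0.
  case=> _ _ eZ; apply/setP => n; rewrite !inE; apply/negP => yn.
  by move: yY; rewrite -eZ (imset_f (fun p : I * V => p.1) yn).
by rewrite (e0 _ gX) (e0 _ gX').
Qed.

Definition col (Y : {set I}) : 'I_k := c (epsilon (inhabits set0) (Good Y)).

Lemma CX Y X : Good Y X -> c X = col Y.
Proof.
move=> gX; apply: (SP gX); apply: epsilon_spec; by exists X.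
Qed.

Lemma Good_iso Y X : Good Y X -> fiso (induced (C := C0) Y) (PStruct fA).
Proof.
move=> gX; have [phi [psi [bphi bpsi hpsi trel]]] := PI gX.
exists psi; split => // s t.
apply: iff_trans (fCr _ _) _; rewrite -map_comp; exact: trel.
Qed.


Lemma enum_sorted n (A' : {set 'I_n}) : sorted ltn (map val (enum A')).
Proof.
rewrite sorted_map /enum_mem -enumT; apply: sorted_filter; first by move=> ? ? ?; apply: ltn_trans.
by rewrite -sorted_map val_enum_ord iota_ltn_sorted.
Qed.

Lemma nth_lt n (i0 : 'I_n) (Hs : {set 'I_n}) a b : a < #|Hs| -> b < #|Hs| ->
  (val (nth i0 (enum Hs) a) < val (nth i0 (enum Hs) b)) = (a < b).
Proof.
rewrite cardE => ha hb.
have H1 a' b' : a' < size (enum Hs) -> b' < size (enum Hs) -> a' < b' ->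
    val (nth i0 (enum Hs) a') < val (nth i0 (enum Hs) b').
  move=> ha' hb' lt; rewrite -!(nth_map i0 (val i0)) //.
  apply: (sorted_ltn_nth ltn_trans (val i0) (enum_sorted Hs)) => //; by rewrite inE size_map.
case: (ltngtP a b) => [lt|gt|->]; first by rewrite H1.
  by rewrite ltnNge ltnW // H1.
by rewrite !ltnn.
Qed.

Section Bside.
Variables (B0' : {set I}) (psiB : {y | y \in B0'} -> QB) (psiB' : QB -> {y | y \in B0'})
  (psiBK : cancel psiB psiB') (psiB'K : cancel psiB' psiB)
  (hpsiB : forall s t, R s (map fC (map val t)) <-> R s (map (@ssval _ _) (map psiB t))).

Definition yb b := val (psiB' (piB b)).
Definition pos b := #|[set b' | (piB b' == piB b) && (g (fB b').2 < g (fB b).2)%R]|.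
Definition beta b : I * V := (yb b, nth ord0 (enum (H (yb b))) (pos b)).
Definition B' := beta @: [set: fcar B].

Lemma pos_lt b : pos b < #|fcar B|.
Proof.
rewrite /pos -cardsT; apply: proper_card; apply/properP; split; first exact: subsetT.
by exists b; rewrite ?inE // ltxx andbF.
Qed.

Lemma pos_tB b : pos b < #|H (yb b)|.
Proof. by rewrite cH; apply: leq_trans (pos_lt b) _; exact: leq_addl. Qed.

Lemma beta_H b : (beta b).2 \in H (beta b).1.
Proof. by rewrite /= -mem_enum; apply: mem_nth; rewrite -cardE; exact: pos_tB. Qed.

Lemma piB_eq x y : piB x = piB y <-> (fB x).1 = (fB y).1.
Proof.
split => [e|e]; first by move: (congr1 (@ssval _ _) e).
by apply: val_inj.
Qed.

Lemma pos_key x y : piB x = piB y -> (g (fB x).2 < g (fB y).2)%R -> pos x < pos y.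
Proof.
move=> e lt; apply: proper_card; apply/properP; split.
  apply/subsetP => z; rewrite !inE => /andP [/eqP ez lz]; rewrite ez e eqxx /=.
  exact: lt_trans lz lt.
by exists x; rewrite !inE ?e ?eqxx ?lt ?ltxx ?andbF.
Qed.

Lemma same_fib x y : piB x = piB y -> g (fB x).2 = g (fB y).2 -> x = y.
Proof.
move=> e eg; apply: fBi; rewrite [fB x]surjective_pairing [fB y]surjective_pairing.
by rewrite (can_inj gK eg) (piB_eq x y).1.
Qed.

Lemma pos_order x y : piB x = piB y -> (pos x < pos y) = (g (fB x).2 < g (fB y).2)%R.
Proof.
move=> e; case: (ltgtP (g (fB x).2) (g (fB y).2)) => [lt|gt|eqg].
- exact: pos_key.
- by apply/negbTE; rewrite -leqNgt; apply: ltnW; exact: pos_key.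
- by rewrite (same_fib e eqg) ltnn.
Qed.

Lemma beta_inj : injective beta.
Proof.
move=> x y [e1 e2].
have ep : piB x = piB y.
  by apply: (can_inj psiB'K); apply: val_inj.
have ey : yb x = yb y by rewrite /yb ep.
rewrite -/(yb x) -/(yb y) ey in e2.
have px := pos_tB x; have py := pos_tB y; rewrite ey in px.
have nxy : ~~ (pos x < pos y) by rewrite -(nth_lt ord0 px py) e2 ltnn.
have nyx : ~~ (pos y < pos x) by rewrite -(nth_lt ord0 py px) e2 ltnn.
move: nxy nyx; rewrite !pos_order //.
case: (ltgtP (g (fB x).2) (g (fB y).2)) => // eg _ _.
exact: same_fib.
Qed.

Lemma beta_same : sameF fB (fun b => hC (beta b)).
Proof.
apply: K_sameF.
- move=> x y; apply: iff_trans (iff_sym (piB_eq x y)) _; rewrite /=; split => [e|e].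
    by rewrite /yb e.
  by apply: (can_inj psiB'K); apply: val_inj; apply: fCi.
- move=> x y e; apply: iff_trans (hprec _ _) _.
  apply: iff_trans _ (iff_sym (iota_lt _ _)).
  have ep : piB x = piB y by apply/piB_eq.
  rewrite /beta /= /yb -ep nth_lt.
  + by rewrite (pos_order ep); split.
  + exact: pos_tB.
  + by have := pos_tB y; rewrite /yb -ep.
- move=> s t.
  have e1 : map (fun x => (fB x).1) t = map (@ssval _ _) (map piB t) := map_comp (@ssval _ _) piB t.
  have e2 : map (fun x => (hC (beta x)).1) t = map fC (map val (map psiB' (map piB t))).
    by rewrite -!map_comp.
  rewrite e1 e2; apply: iff_trans _ (iff_sym (hpsiB _ _)).
  have -> : map psiB (map psiB' (map piB t)) = map piB t.
    by rewrite -map_comp (eq_map psiB'K) map_id.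
  exact: iff_refl.
Qed.

Lemma fiso_B' : fiso (induced (C := C) B') B.
Proof.
pose beta' b : {x | x \in B'} := Sub (beta b) (imset_f beta (in_setT b)).
have b'i : injective beta'.
  by move=> x y /(congr1 val) /beta_inj.
have bb : bijective beta'.
  apply: (@inj_card_bij _ _ beta' b'i); rewrite card_sig.
  apply: (@leq_trans #|B'|); first by apply/eq_leq/eq_card => x; rewrite !inE.
  by rewrite -cardsT; exact: leq_imset_card.
case: bb => betainv K1 K2.
exists betainv; split; first exact: (Bijective K2 K1).
move=> s t; rewrite -{1}(mapK K2 t).
set l := map betainv t.
change (srel F s (map hC (map val (map beta' l))) <-> Defs.frel B s l).
have -> : map val (map beta' l) = map beta l by rewrite -map_comp.
apply: iff_trans _ (iff_sym (fBr _ _)).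
rewrite -map_comp; exact: iff_sym (beta_same s l).
Qed.

Lemma B'_prop p : p \in B' -> p.1 \in B0' /\ p.2 \in H p.1.
Proof.
move=> /imsetP [b _ ->]; split; first exact: valP.
exact: beta_H.
Qed.

End Bside.

Lemma final : arrows C0 (PStruct fB) (PStruct fA) k ->
  exists B'' : {set I * V}, fiso (induced (C := C) B'') B /\
    forall A1 A2 : {set I * V}, A1 \subset B'' -> A2 \subset B'' ->
      fiso (induced (C := C) A1) A -> fiso (induced (C := C) A2) A -> c A1 = c A2.
Proof.
move=> arr; have [B0' [[psi [bpsi hpsi]] hom0]] := arr col.
case: bpsi => psi' K1 K2.
have hpsiB : forall s t, R s (map fC (map val t)) <-> R s (map (@ssval _ _) (map psi t)).
  by move=> s t; apply: iff_trans (iff_sym (fCr _ _)) (hpsi s t).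
exists (B' psi'); split; first exact: fiso_B' hpsiB.
move=> A1 A2 s1 s2 i1 i2.
have G (X : {set I * V}) : X \subset B' psi' -> fiso (induced (C := C) X) A -> Good [set p.1 | p in X] X.
  move=> sX iX; split => // p /(subsetP sX) /B'_prop []; done.
have sub (X : {set I * V}) : X \subset B' psi' -> [set p.1 | p in X] \subset B0'.
  by move=> sX; apply/subsetP => y /imsetP [p /(subsetP sX) /B'_prop [+ _] ->].
rewrite (CX (G _ s1 i1)) (CX (G _ s2 i2)); apply: hom0; try exact: sub.
  exact: Good_iso (G _ s1 i1).
exact: Good_iso (G _ s2 i2).
Qed.

End Key.


Theorem mainTheorem3 (L : lang) (E Lt : sym L) (T : countType)
  (R : sym L -> seq T -> Prop) (prec : nat -> nat -> Prop) :
  E != Lt -> ar E = 2 -> ar Lt = 2 ->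
  wf_struct (Struct T R) ->
  (exists f : nat -> T, injective f) ->
  tournament (fun x y => R E [:: x; y]) ->
  homogeneous_digraph (fun x y : T => R E [:: x; y]) ->
  strict_linear_order (fun x y => R Lt [:: x; y]) ->
  iso_to_rat prec ->
  ramsey_property (Age (Struct T R)) ->
  ramsey_property (Age (TIomega Lt R prec)).
Proof.
move=> hELt arE arLt wf _ tour _ slo [g [gb hprec]] RP k k0 A B [fA [fAi fAr]] [fB [fBi fBr]].
case: gb => ginv gK ginvK.
have inAge (P : finType) (u : P -> T * nat) : Age (Struct T R) (PStruct R u).
  by exists (@ssval _ _); split; [exact: val_inj | move=> s t; exact: iff_refl].
have [C0 [[fC [fCi fCr]] arr]] := RP k k0 _ _ (inAge _ fA) (inAge _ fB).
have [N HN] := multi_all (fcar C0) k (#|fcar A| + #|fcar B|).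
exists (@FStruct L (fcar C0 * 'I_N.+1)%type
  (fun s t => srel (TIomega Lt R prec) s (map (hC ginv fC (N := N)) t))).
split.
  exists (hC ginv fC (N := N)); split; last by move=> s t; exact: iff_refl.
  exact: (@hCi _ _ _ _ ginvK _ _ fCi N).
move=> c; have [H [cH hH]] := HN (fun S => c (cset S)).
exact: (final hELt arLt wf tour slo ginvK gK hprec fAr fBi fBr fCi fCr cH hH arr).
Qed.
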